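(* Let $s,d\ge1$ with $s\le 2^d$, and let $\mathbf{z}^0,\ldots,\mathbf{z}^{s-1}\in\{0,1\}^d$ be pairwise distinct. Then there is a two-layer Boolean threshold network with $s$ input nodes and $d$ output nodes that maps $\mathbf{h}^i[s]$ to $\mathbf{z}^i$ for every $i=0,\ldots,s-1$.
   Context: For integers $0\le i<s$, the step vector $\mathbf{h}^i[s]\in\{0,1\}^s$ has $\mathbf{h}^i[s]_j=1$ for $0\le j\le i$ and $0$ for $i<j<s$. A two-layer Boolean threshold network with $s$ inputs and $d$ outputs computes a map $\{0,1\}^s\to\{0,1\}^d$ each of whose coordinates is of the form $\mathbf{u}\mapsto[\mathbf{w}\cdot\mathbf{u}\ge\theta]$ (value $1$ iff $\mathbf{w}\cdot\mathbf{u}\ge\theta$) with $\mathbf{w}\in\mathbb{Z}^s$, $\theta\in\mathbb{Z}$. *)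

(* Defs.v *)
From mathcomp Require Import all_boot all_order all_algebra.
Set Implicit Arguments. Unset Strict Implicit. Unset Printing Implicit Defensive.
Import Order.TTheory GRing.Theory Num.Theory.
Local Open Scope ring_scope.

Definition bvec (n : nat) := {ffun 'I_n -> bool}.

Definition step_vec (s : nat) (i : nat) : bvec s := [ffun j : 'I_s => (j <= i)%N].

Definition threshold_unit (s : nat) (w : 'I_s -> int) (theta : int) (u : bvec s) : bool :=
  theta <= \sum_(j < s) w j * (u j)%:R.

Definition tln (s d : nat) (W : 'I_d -> 'I_s -> int) (Theta : 'I_d -> int)
  (u : bvec s) : bvec d :=
  [ffun k : 'I_d => threshold_unit (W k) (Theta k) u].

(* Main.v *)
Require Import Defs.
From mathcomp Require Import all_boot all_order all_algebra.
Import Order.TTheory GRing.Theory Num.Theory.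
Local Open Scope ring_scope.
Set Implicit Arguments. Unset Strict Implicit.

Definition cc (s d : nat) (z : 'I_s -> bvec d) (k : 'I_d) (n : nat) : int :=
  if insub n is Some i then ((z i k : bool)%:R : int) else 0.

Definition ww (s d : nat) (z : 'I_s -> bvec d) (k : 'I_d) (n : nat) : int :=
  cc z k n - (if n is m.+1 then cc z k m else 0).

Lemma tele (s d : nat) (z : 'I_s -> bvec d) (k : 'I_d) n :
  \sum_(j < n.+1) ww z k j = cc z k n.
Proof.
elim: n => [|n IH]; first by rewrite big_ord1 /ww subr0.
by rewrite big_ord_recr /= IH /ww addrC subrK.
Qed.

Theorem lemma13 (s d : nat) (hs : (1 <= s)%N) (hd : (1 <= d)%N) (hsd : (s <= 2 ^ d)%N)
  (z : 'I_s -> bvec d) (hz : injective z) :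
  exists (W : 'I_d -> 'I_s -> int) (Theta : 'I_d -> int),
    forall i : 'I_s, tln W Theta (step_vec s i) = z i.
Proof.
exists (fun k j => ww z k j), (fun _ => 1) => i.
apply/ffunP => k; rewrite !ffunE /threshold_unit.
have -> : \sum_(j < s) ww z k j * ((step_vec s i j)%:R : int) = \sum_(j < i.+1) ww z k j.
  under eq_bigr => j _ do rewrite ffunE.
  rewrite -(big_mkord xpredT (fun j => ww z k j * ((j <= i)%N%:R : int))) /=.
  rewrite (big_cat_nat (n := i.+1)) //=.
  rewrite [X in _ + X]big1_seq ?addr0; last first.
    move=> j /andP[_]; rewrite mem_index_iota => /andP[Hj _].
    by rewrite ltnNge in Hj; rewrite (negbTE Hj) mulr0.
  rewrite big_mkord; apply: eq_bigr => j _.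
  by rewrite -ltnS ltn_ord mulr1.
rewrite tele /cc valK.
by case: (z i k).
Qed.
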